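(* Let $\mathbb{X}$ be a Banach space and $\delta>0$. Suppose $V\subset\mathbb{X}$ is a $\delta$-separated set with $\#V\geq2$ and there exist a line $L$ and a number $0\leq\alpha<1/8$ such that $\mathrm{dist}(x,L)\leq\alpha\delta$ for all $x\in V$. Let $\pi_L$ be any metric projection onto $L$ and let $\Pi_L$ be any $J$-projection onto $L$. Then there is an identification of $L$ with $\mathbb{R}$ (via an affine isometry) such that for all $x,y\in V$, $\pi_L(x)\leq\pi_L(y)$ if and only if $\Pi_L(x)\leq\Pi_L(y)$.
   Context: All Banach spaces are real; a line is a one-dimensional affine subspace. $V$ is $\delta$-separated if $|v-w|\geq\delta$ for distinct $v,w\in V$. A metric projection onto $L$ is any map $\pi_L:\mathbb{X}\to L$ with $|x-\pi_L(x)|=\mathrm{dist}(x,L)$. A normalized duality mapping is any (possibly nonlinear) map $J:\mathbb{X}\to\mathbb{X}^*$ with $|J(x)|_{\mathbb{X}^*}=|x|$ and $\langle J(x),x\rangle=|x|^2$ for all $x$. If $L$ is a one-dimensional linear subspace, the $J$-projection onto $L$ is $\Pi_L(x)=\langle J(v),x\rangle v$ where $v\in L$ with $|v|=1$ is fixed; for an affine line $L$ and any $q\in L$, $\Pi_L(x)=q+\Pi_{L-q}(x-q)$. *)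

(* Defs.v *)
From Stdlib Require Import Reals.
Open Scope R_scope.

Record NormedSpace := {
  car :> Type;
  zero : car;
  add : car -> car -> car;
  opp : car -> car;
  scal : R -> car -> car;
  norm : car -> R;
  add_assoc : forall x y z, add x (add y z) = add (add x y) z;
  add_comm : forall x y, add x y = add y x;
  add_zero : forall x, add x zero = x;
  add_opp : forall x, add x (opp x) = zero;
  scal_assoc : forall a b x, scal a (scal b x) = scal (a * b) x;
  scal_one : forall x, scal 1 x = x;
  scal_distr_l : forall a x y, scal a (add x y) = add (scal a x) (scal a y);
  scal_distr_r : forall a b x, scal (a + b) x = add (scal a x) (scal b x);
  norm_eq0 : forall x, norm x = 0 -> x = zero;
  norm_scal : forall a x, norm (scal a x) = Rabs a * norm x;
  norm_triangle : forall x y, norm (add x y) <= norm x + norm y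
}.

Arguments zero {_}.
Arguments add {_} _ _.
Arguments opp {_} _.
Arguments scal {_} _ _.
Arguments norm {_} _.

Definition sub {X : NormedSpace} (x y : X) : X := add x (opp y).

Definition banach (X : NormedSpace) : Prop :=
  forall u : nat -> X,
    (forall eps, eps > 0 -> exists N, forall m n, (m >= N)%nat -> (n >= N)%nat ->
        norm (sub (u m) (u n)) < eps) ->
    exists l : X, forall eps, eps > 0 -> exists N, forall n, (n >= N)%nat ->
        norm (sub (u n) l) < eps.

Definition separated {X : NormedSpace} (V : X -> Prop) (delta : R) : Prop :=
  forall v w, V v -> V w -> v <> w -> norm (sub v w) >= delta.

Definition is_line {X : NormedSpace} (L : X -> Prop) : Prop :=
  exists (q u : X), u <> zero /\ forall x, L x <-> exists t : R, x = add q (scal t u).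

Definition is_inf (S : R -> Prop) (d : R) : Prop :=
  (forall s, S s -> d <= s) /\ (forall b, (forall s, S s -> b <= s) -> b <= d).

Definition is_dist {X : NormedSpace} (x : X) (L : X -> Prop) (d : R) : Prop :=
  is_inf (fun r => exists y, L y /\ r = norm (sub x y)) d.

Definition metric_projection {X : NormedSpace} (L : X -> Prop) (p : X -> X) : Prop :=
  forall x, L (p x) /\ is_dist x L (norm (sub x (p x))).

Definition linear_functional {X : NormedSpace} (f : X -> R) : Prop :=
  (forall x y, f (add x y) = f x + f y) /\ (forall a x, f (scal a x) = a * f x).

Definition dual_norm {X : NormedSpace} (f : X -> R) (c : R) : Prop :=
  is_lub (fun r => exists y : X, norm y <= 1 /\ r = Rabs (f y)) c.

Definition duality_map {X : NormedSpace} (J : X -> X -> R) : Prop :=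
  forall x, linear_functional (J x) /\ dual_norm (J x) (norm x)
            /\ J x x = norm x * norm x.

(* J-projection onto the affine line L, built from the base point q in L and a
   unit vector v of the direction space L - q:  Pi(x) = q + <J v, x - q> v *)
Definition J_projection {X : NormedSpace} (J : X -> X -> R) (q v : X) : X -> X :=
  fun x => add q (scal (J v (sub x q)) v).

Definition J_projection_data {X : NormedSpace} (L : X -> Prop) (q v : X) : Prop :=
  L q /\ norm v = 1 /\ forall t : R, L (add q (scal t v)).

Definition affine_isometry_onto_R {X : NormedSpace} (L : X -> Prop) (phi : X -> R) : Prop :=
  (forall a b, L a -> L b -> Rabs (phi a - phi b) = norm (sub a b)) /\
  (forall a b t, L a -> L b ->
       phi (add a (scal t (sub b a))) = phi a + t * (phi b - phi a)) /\
  (forall r : R, exists z, L z /\ phi z = r).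

(* Main.v *)
Require Import Defs.
From Stdlib Require Import Reals Lra Psatz Classical.
Open Scope R_scope.

Arguments add_assoc {_} _ _ _.
Arguments add_comm {_} _ _.
Arguments add_zero {_} _.
Arguments add_opp {_} _.
Arguments scal_assoc {_} _ _ _.
Arguments scal_one {_} _.
Arguments scal_distr_l {_} _ _ _.
Arguments scal_distr_r {_} _ _ _.
Arguments norm_eq0 {_} _ _.
Arguments norm_scal {_} _ _.
Arguments norm_triangle {_} _ _.

Lemma Rabs_m1 : Rabs (-1) = 1.
Proof. unfold Rabs; destruct Rcase_abs; lra. Qed.

Section Alg.
Variable X : NormedSpace.

Lemma add_swap4 (a b c d : X) : add (add a b) (add c d) = add (add a c) (add b d).
Proof.
  rewrite <- !add_assoc. f_equal. rewrite !add_assoc. f_equal. apply add_comm.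
Qed.

Lemma zero_add (a : X) : add zero a = a.
Proof. rewrite add_comm. apply add_zero. Qed.

Lemma sub_split (a b c : X) : sub a c = add (sub a b) (sub b c).
Proof.
  unfold sub. rewrite <- add_assoc. f_equal.
  rewrite add_assoc. rewrite (add_comm (opp b) b), add_opp. now rewrite zero_add.
Qed.

Lemma add_sub_l (a w : X) : sub (add a w) a = w.
Proof.
  unfold sub. rewrite <- add_assoc, (add_comm w), add_assoc, add_opp. apply zero_add.
Qed.

Lemma sub_add_l (a w q : X) : sub (add a w) q = add (sub a q) w.
Proof.
  unfold sub. rewrite <- !add_assoc. f_equal. apply add_comm.
Qed.

Lemma scal0 (x : X) : scal 0 x = zero.
Proof.
  assert (H : scal 0 x = add (scal 0 x) (scal 0 x)).
  { rewrite <- scal_distr_r. f_equal. ring. }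
  assert (H2 : add (add (scal 0 x) (scal 0 x)) (opp (scal 0 x)) = scal 0 x).
  { rewrite <- add_assoc, add_opp, add_zero. reflexivity. }
  rewrite <- H, add_opp in H2. now symmetry.
Qed.

Lemma opp_unique (x w : X) : add x w = zero -> w = opp x.
Proof.
  intros H. rewrite <- (add_zero w), <- (add_opp x), add_assoc, (add_comm w x), H.
  apply zero_add.
Qed.

Lemma opp_scal (x : X) : opp x = scal (-1) x.
Proof.
  symmetry. apply opp_unique. rewrite <- (scal_one x) at 1.
  rewrite <- scal_distr_r. replace (1 + -1) with 0 by ring. apply scal0.
Qed.

Lemma norm_nonneg (x : X) : 0 <= norm x.
Proof.
  assert (H := norm_triangle x (scal (-1) x)).
  rewrite <- opp_scal, add_opp, <- (scal0 x), (norm_scal 0), Rabs_R0 in H.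
  rewrite opp_scal, norm_scal, Rabs_m1 in H. lra.
Qed.

Lemma sub_sym (a b : X) : sub a b = scal (-1) (sub b a).
Proof.
  unfold sub. rewrite !opp_scal, scal_distr_l, scal_assoc.
  replace (-1 * -1) with 1 by ring. rewrite scal_one. apply add_comm.
Qed.

Lemma norm_sub_sym (a b : X) : norm (sub a b) = norm (sub b a).
Proof. rewrite sub_sym, norm_scal, Rabs_m1. ring. Qed.

Lemma line_sub (q0 u : X) s r :
  sub (add q0 (scal s u)) (add q0 (scal r u)) = scal (s - r) u.
Proof.
  unfold sub. rewrite opp_scal, scal_distr_l, add_swap4, <- opp_scal, add_opp, zero_add.
  rewrite scal_assoc, <- scal_distr_r. f_equal. ring.
Qed.

Lemma lin_zero (f : X -> R) : linear_functional f -> f zero = 0.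
Proof.
  intros [Ha _]. assert (H := Ha zero zero). rewrite add_zero in H. lra.
Qed.

Lemma lin_sub (f : X -> R) a b : linear_functional f -> f (sub a b) = f a - f b.
Proof.
  intros [Ha Hs]. unfold sub. rewrite Ha, opp_scal, Hs. ring.
Qed.

Lemma dual_bound (f : X -> R) : linear_functional f -> dual_norm f 1 ->
  forall z, Rabs (f z) <= norm z.
Proof.
  intros Hf Hd z. destruct (Req_dec (norm z) 0) as [H0|H0].
  - rewrite (norm_eq0 z H0), lin_zero by auto. rewrite Rabs_R0. apply norm_nonneg.
  - assert (Hp : 0 < norm z) by (pose proof (norm_nonneg z); lra).
    destruct Hd as [Hub _].
    assert (Hy : Rabs (f (scal (/ norm z) z)) <= 1).
    { apply Hub. exists (scal (/ norm z) z). split; auto.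
      rewrite norm_scal, Rabs_right by (left; apply Rinv_0_lt_compat; lra).
      right. field. lra. }
    destruct Hf as [_ Hs]. rewrite Hs, Rabs_mult, Rabs_right in Hy
      by (left; apply Rinv_0_lt_compat; lra).
    apply (Rmult_le_compat_l (norm z)) in Hy; [|lra].
    rewrite <- Rmult_assoc, Rinv_r, Rmult_1_l, Rmult_1_r in Hy by lra. exact Hy.
Qed.

End Alg.

Theorem mainTheorem12
  (X : NormedSpace) (HX : banach X) (delta : R) (Hdelta : delta > 0)
  (V : X -> Prop) (HV : separated V delta)
  (HV2 : exists v w, V v /\ V w /\ v <> w)
  (L : X -> Prop) (HL : is_line L) (alpha : R)
  (Halpha : 0 <= alpha < 1/8)
  (Hclose : forall x d, V x -> is_dist x L d -> d <= alpha * delta)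
  (piL : X -> X) (HpiL : metric_projection L piL)
  (J : X -> X -> R) (HJ : duality_map J) (q v : X) (Hqv : J_projection_data L q v) :
  exists phi : X -> R, affine_isometry_onto_R L phi /\
    forall x y, V x -> V y ->
      (phi (piL x) <= phi (piL y) <->
       phi (J_projection J q v x) <= phi (J_projection J q v y)).
Proof.
  destruct Hqv as [Lq [Nv Lline]].
  destruct (HJ v) as [Hlin [Hdn Hvv]].
  rewrite Nv, Rmult_1_l in Hvv. rewrite Nv in Hdn.
  set (f := J v) in *.
  assert (Hb := dual_bound X f Hlin Hdn).
  destruct Hlin as [Hadd Hsc].
  assert (Hsub : forall a b, f (sub a b) = f a - f b)
    by (intros; apply lin_sub; split; auto).
  assert (Hphi : forall a b, f (sub a q) - f (sub b q) = f (sub a b)).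
  { intros a b. rewrite (sub_split X a b q), Hadd. ring. }
  assert (Hqw : forall w, f (sub (add q w) q) = f w).
  { intros w. now rewrite add_sub_l. }
  destruct HL as [q0 [u [Hu HLu]]].
  assert (Hiso : forall a b, L a -> L b -> Rabs (f (sub a b)) = norm (sub a b)).
  { intros a b La Lb.
    destruct (proj1 (HLu a) La) as [s ->]. destruct (proj1 (HLu b) Lb) as [r ->].
    destruct (proj1 (HLu q) Lq) as [t0 Ht0].
    destruct (proj1 (HLu _) (Lline 1)) as [t1 Ht1].
    assert (Hv : v = scal (t1 - t0) u).
    { rewrite <- (line_sub X q0 u t1 t0), <- Ht1, <- Ht0, add_sub_l, scal_one. reflexivity. }
    assert (E1 : (t1 - t0) * f u = 1) by (rewrite <- Hsc, <- Hv; exact Hvv).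
    assert (E2 : Rabs (t1 - t0) * norm u = 1) by (rewrite <- norm_scal, <- Hv; exact Nv).
    assert (E3 : Rabs (t1 - t0) * Rabs (f u) = 1) by (rewrite <- Rabs_mult, E1; apply Rabs_R1).
    assert (Hfu : Rabs (f u) = norm u).
    { assert (Rabs (t1 - t0) <> 0) by (intro Hc; rewrite Hc in E2; lra).
      apply (Rmult_eq_reg_l (Rabs (t1 - t0))); lra. }
    rewrite line_sub, Hsc, norm_scal, Rabs_mult, Hfu. reflexivity. }
  exists (fun x => f (sub x q)). split.
  - split; [|split].
    + intros a b La Lb. cbv beta. rewrite Hphi. apply Hiso; auto.
    + intros a b t La Lb. cbv beta.
      rewrite sub_add_l, Hadd, Hsc, <- (Hphi b a). ring.
    + intros r. exists (add q (scal r v)). split; auto.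
      cbv beta. rewrite Hqw, Hsc, Hvv. ring.
  - intros x y Vx Vy. unfold J_projection. cbv beta. rewrite !Hqw, !Hsc, Hvv, !Rmult_1_r.
    assert (Hd : forall z, V z -> norm (sub z (piL z)) <= alpha * delta).
    { intros z Vz. apply (Hclose z); auto. apply (HpiL z). }
    assert (Hc : forall z, V z -> Rabs (f (sub (piL z) q) - f (sub z q)) <= alpha * delta).
    { intros z Vz. rewrite Hphi.
      eapply Rle_trans; [apply Hb|]. rewrite norm_sub_sym. apply Hd; auto. }
    set (e := alpha * delta) in *.
    assert (He : 4 * e < delta) by (unfold e; nra).
    assert (He0 : 0 <= e) by (unfold e; nra).
    destruct (classic (x = y)) as [->|Hxy]; [lra|].
    assert (Hsep := HV x y Vx Vy Hxy).
    assert (Htri : norm (sub x y) <= norm (sub x (piL x)) + norm (sub (piL x) (piL y))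
                                    + norm (sub (piL y) y)).
    { rewrite (sub_split X x (piL x) y), (sub_split X (piL x) (piL y) y).
      eapply Rle_trans; [apply norm_triangle|].
      pose proof (norm_triangle (sub (piL x) (piL y)) (sub (piL y) y)). lra. }
    rewrite norm_sub_sym with (a := piL y) in Htri.
    rewrite <- (Hiso (piL x) (piL y)) in Htri by (apply HpiL).
    rewrite <- Hphi in Htri.
    pose proof (Hd x Vx). pose proof (Hd y Vy).
    pose proof (Hc x Vx). pose proof (Hc y Vy).
    change (J v) with f.
    set (Px := f (sub (piL x) q)) in *. set (Py := f (sub (piL y) q)) in *.
    set (Qx := f (sub x q)) in *. set (Qy := f (sub y q)) in *.
    revert H1 H2 Htri. unfold Rabs. repeat destruct Rcase_abs; intros; split; intros.
    all: lra.
Qed.
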